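(* Let $\alpha,\beta,\gamma,\alpha',\gamma'\in\mathbb C$ and let $T_{n,k}=\left[\begin{array}{cc|c}\alpha,&\beta&\gamma\\ \alpha',&-\beta&\gamma'\end{array}\right]_{n,k}$ with row polynomials $G_n(t)$. Then for all $0\le k\le n$: (RT) $\left[\begin{array}{cc|c}\alpha'-\beta,&\beta&\gamma'\\ \alpha+\beta,&-\beta&\gamma\end{array}\right]_{n,k}=T_{n,n-k}$, equivalently the row polynomials of the left-hand triangle are $t^nG_n(1/t)$; (UBT) $\left[\begin{array}{cc|c}-\alpha-\alpha',&\beta&-\gamma-\gamma'\\ \alpha',&-\beta&\gamma'\end{array}\right]_{n,k}=(-1)^{n-k}\sum_{j=k}^n\binom jk T_{n,j}$, equivalently the row polynomials of the left-hand triangle are $(-1)^nG_n(1-t)$. In terms of EGFs, the RT triangle has EGF $G(1/t,tz)$ and the UBT triangle has EGF $G(1-t,-z)$, where $G$ is the EGF of $T$. The two transformations are involutions and generate a group of six transformations of GKP triangles with $\beta'=-\beta$ (preserving $\beta,\beta'$) isomorphic to the symmetric group $S_3$.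
   Context: GKP triangle: for complex parameters $\alpha,\beta,\gamma,\alpha',\beta',\gamma'$, the array $T_{n,k}=\left[\begin{array}{cc|c}\alpha,&\beta&\gamma\\ \alpha',&\beta'&\gamma'\end{array}\right]_{n,k}$ ($n,k\in\mathbb Z$) is defined by $T_{0,0}=1$, $T_{n,k}=0$ if $n<0$, $k<0$ or $k>n$, and $T_{n+1,k+1}=[\alpha n+\beta(k+1)+\gamma]\,T_{n,k+1}+[\alpha' n+\beta' k+\gamma']\,T_{n,k}$ for all $n\ge0$ and all integers $k$. Its $n$th row polynomial is $G_n(t)=\sum_{k=0}^n T_{n,k}t^k$ and its EGF is $G(t,z)=\sum_{n\ge0}G_n(t)\,z^n/n!$. *)

(* Defs.v *)
From mathcomp Require Import all_boot all_algebra complex.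
From mathcomp Require Import Rstruct.
Set Implicit Arguments. Unset Strict Implicit. Unset Printing Implicit Defensive.
Import GRing.Theory.
Local Open Scope ring_scope.

Definition C : fieldType := Rdefinitions.R[i].

(* Indices are natural numbers; entries with k > n are 0 automatically,
   and the recurrence at k = -1 reads T(n+1,0) = (a n + c) T(n,0)
   since T(n,-1) = 0. *)
Fixpoint gkp (R : comRingType) (a b c a' b' c' : R) (n k : nat) : R :=
  match n with
  | 0%N => if k == 0%N then 1 else 0
  | m.+1 =>
    match k with
    | 0%N => (a * m%:R + c) * gkp a b c a' b' c' m 0
    | j.+1 => (a * m%:R + b * j.+1%:R + c) * gkp a b c a' b' c' m j.+1
              + (a' * m%:R + b' * j%:R + c') * gkp a b c a' b' c' m j
    end
  end.

Definition gkp_row (R : comRingType) (a b c a' b' c' : R) (n : nat) : {poly R} :=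
  \sum_(k < n.+1) gkp a b c a' b' c' n k *: 'X^k.

Definition params := (C * C * C * C * C)%type.

Definition T_of (p : params) : nat -> nat -> C :=
  let: (a, b, c, a', c') := p in gkp a b c a' (- b) c'.

Definition G_of (p : params) : nat -> {poly C} :=
  let: (a, b, c, a', c') := p in gkp_row a b c a' (- b) c'.

Definition RT (p : params) : params :=
  let: (a, b, c, a', c') := p in (a' - b, b, c', a + b, c).

Definition UBT (p : params) : params :=
  let: (a, b, c, a', c') := p in (- a - a', b, - c - c', a', c').

(* Main.v *)
Require Import Defs.
From mathcomp Require Import all_boot all_algebra complex Rstruct.
From mathcomp Require Import ring zify.
Import GRing.Theory Num.Theory.
Local Open Scope ring_scope.

Section Gen.
Variable R : comRingType.

Lemma gkp_gt (a b c a' b' c' : R) n k : (n < k)%N -> gkp a b c a' b' c' n k = 0.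
Proof.
elim: n k => [|n IH] [|k] //= H.
 rewrite !IH ?mulr0 ?addr0 //; exact: ltnW.
Qed.

Lemma coef_row (a b c a' b' c' : R) n k :
  (gkp_row a b c a' b' c' n)`_k = gkp a b c a' b' c' n k.
Proof.
rewrite /gkp_row coef_sum.
under eq_bigr => i _ do rewrite coefZ coefXn.
case: (ltnP n k) => H.
  rewrite gkp_gt // big1 // => i _; rewrite (_ : (k == i) = false) ?mulr0 //.
  apply/negbTE; rewrite neq_ltn; apply/orP; right; exact: (leq_trans (ltn_ord i)).
rewrite (bigD1 (Ordinal (H : (k < n.+1)%N))) //= eqxx mulr1 big1 ?addr0 // => i Hi.
rewrite (_ : (k == i) = false) ?mulr0 //; apply/negbTE; apply: contra Hi => /eqP Hk.
by apply/eqP/val_inj => /=.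
Qed.

Lemma row_rec (a b c a' b' c' : R) n :
  gkp_row a b c a' b' c' n.+1 =
   ((a * n%:R + c)%:P + (a' * n%:R + c')%:P * 'X) * gkp_row a b c a' b' c' n
   + (b%:P * 'X + b'%:P * ('X * 'X)) * (gkp_row a b c a' b' c' n)^`().
Proof.
apply/polyP => k.
rewrite coef_row !mulrDl !coefD coefCM -!mulrA !coefCM.
rewrite !coefXM.
case: k => [|k] /=.
  by rewrite coef_row !mulr0 !addr0.
rewrite !coef_deriv !coef_row.
case: k => [|k] /=.
  rewrite -(mulr_natr (gkp a b c a' b' c' n 1)).
  move: (gkp a b c a' b' c' n 1) (gkp a b c a' b' c' n 0) => x y.
  rewrite mulr0 addr0 mulr1; ring.
rewrite -(mulr_natr (gkp a b c a' b' c' n k.+2)) -(mulr_natr (gkp a b c a' b' c' n k.+1)).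
move: (gkp a b c a' b' c' n k.+2) (gkp a b c a' b' c' n k.+1) => x y.
move: (k.+1%:R) (k.+2%:R : R) => u v. ring.
Qed.

Lemma gkp_RT (a b c a' c' : R) n k : (k <= n)%N ->
  gkp (a'-b) b c' (a+b) (-b) c n k = gkp a b c a' (-b) c' n (n-k).
Proof.
elim: n k => [|n IH] k Hk.
  by move: Hk; rewrite leqn0 => /eqP ->.
case: k Hk => [|j] Hj.
  rewrite subn0 [LHS]/= IH // subn0 [RHS]/= (gkp_gt _ _ _ _ _ _ _ _ (ltnSn n)) // mulr0 add0r.
  move: (gkp a b c a' (-b) c' n n) => x; ring.
rewrite subSS [LHS]/=.
case: (ltnP j n) => Hjn.
  set m := (n - j.+1)%N.
  have Hnj : (n - j = m.+1)%N by rewrite /m; lia.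
  have Hc : n%:R = m%:R + j%:R + 1 :> R.
    by rewrite -natrD natr1; congr (_%:R); rewrite /m; lia.
  rewrite IH // IH ?(ltnW Hjn) // Hnj -/m [RHS]/=.
  move: (gkp a b c a' (-b) c' n m.+1) (gkp a b c a' (-b) c' n m) => x y.
  rewrite Hc; ring.
have -> : j = n by apply/eqP; rewrite eqn_leq Hjn -ltnS Hj.
rewrite subnn (gkp_gt _ _ _ _ _ _ _ _ (ltnSn n)) // mulr0 add0r IH // subnn [RHS]/=.
move: (gkp a b c a' (-b) c' n 0) => x; ring.
Qed.

Lemma row_UBT (a b c a' c' : R) n :
  gkp_row (-a-a') b (-c-c') a' (-b) c' n =
  (-1)^+n *: (gkp_row a b c a' (-b) c' n \Po (1 - 'X)).
Proof.
elim: n => [|n IH].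
  rewrite /gkp_row !big_ord1 /= !scale1r expr0 -polyC1 comp_polyC //.
rewrite row_rec IH row_rec.
rewrite derivZ deriv_comp derivB -polyC1 derivC derivX sub0r.
rewrite !(comp_polyD, comp_polyM, comp_polyX) (comp_polyC b) (comp_polyC (-b)) (comp_polyC (a * n%:R + c)) (comp_polyC (a' * n%:R + c')).
move: (gkp_row a b c a' (-b) c' n \Po (1 - 'X)) ((gkp_row a b c a' (-b) c' n)^`() \Po (1 - 'X)) => P Q.
rewrite -!mul_polyC !(polyCD, polyCM, polyCN, polyCB, polyC_natr, polyC_exp) exprS.
rewrite polyC1. ring.
Qed.

Lemma coef_1mX j k : ((1 - 'X : {poly R}) ^+ j)`_k = (-1) ^+ k * 'C(j, k)%:R.
Proof.
elim: j k => [|j IH] k.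
  by rewrite expr0 coef1 bin0n; case: k => [|k] /=; rewrite ?mulr1 ?mulr0.
rewrite exprSr mulrBr mulr1 coefB coefMX IH.
case: k => [|k] /=; first by rewrite !bin0 subr0.
rewrite IH binS natrD exprS; ring.
Qed.

Lemma sign_sq k : (-1) ^+ k * (-1) ^+ k = 1 :> R.
Proof. by rewrite -exprMn mulrNN mulr1 expr1n. Qed.

Lemma gkp_UBT (a b c a' c' : R) n k : (k <= n)%N ->
  gkp (-a-a') b (-c-c') a' (-b) c' n k =
  (-1) ^+ (n - k) * \sum_(k <= j < n.+1) 'C(j, k)%:R * gkp a b c a' (-b) c' n j.
Proof.
move=> Hk.
rewrite -coef_row row_UBT coefZ /gkp_row.
rewrite (big_morph (comp_poly (1 - 'X)) (fun p r => comp_polyD p r _) (comp_poly0 _)) coef_sum.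
under eq_bigr => i _ do rewrite comp_polyZ comp_Xn_poly coefZ coef_1mX.
have -> : \sum_(k <= j < n.+1) 'C(j, k)%:R * gkp a b c a' (-b) c' n j =
          \sum_(j < n.+1) 'C(j, k)%:R * gkp a b c a' (-b) c' n j.
  rewrite -(big_mkord xpredT (fun j => 'C(j, k)%:R * gkp a b c a' (-b) c' n j)).
  rewrite [RHS](@big_cat_nat _ _ _ k 0 n.+1) //=.
  rewrite [X in _ = X + _]big1_seq ?add0r // => j /andP [_].
  by rewrite mem_index_iota => /andP [_ Hj]; rewrite bin_small // mul0r.
  exact: leqW.
rewrite !mulr_sumr; apply: eq_bigr => i _.
rewrite -{1}(subnK Hk) exprD.
move: ((-1) ^+ (n - k) : R) (gkp a b c a' (-b) c' n i) ('C(i, k)%:R : R) => u x y.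
transitivity (u * ((-1) ^+ k * (-1) ^+ k) * (y * x)); first ring.
by rewrite sign_sq mulr1.
Qed.
End Gen.

Lemma eval_RT (F : fieldType) (a b c a' c' : F) n t : t != 0 ->
  (gkp_row (a'-b) b c' (a+b) (-b) c n).[t] = t ^+ n * (gkp_row a b c a' (-b) c' n).[t^-1].
Proof.
move=> Ht.
rewrite /gkp_row !horner_sum mulr_sumr.
rewrite (reindex_inj rev_ord_inj) /=.
apply: eq_bigr => i _.
rewrite !hornerZ !hornerXn gkp_RT; last by rewrite subSS leq_subr.
rewrite subSS subKn ?(leq_ord i) //.
have Htn : t ^+ n = t ^+ (n - i) * t ^+ i by rewrite -exprD subnK ?(leq_ord i).
rewrite Htn exprVn -mulrA (mulrCA (t ^+ i)) mulfV ?expf_neq0 // mulr1 mulrC //.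
Qed.

Theorem mainTheorem3 :
  (* (RT), entrywise and via row polynomials *)
  (forall (p : params) (n k : nat), (k <= n)%N ->
     T_of (RT p) n k = T_of p n (n - k)) /\
  (forall (p : params) (n : nat) (t : C), t != 0 ->
     (G_of (RT p) n).[t] = t ^+ n * (G_of p n).[t^-1]) /\
  (* (UBT), entrywise and via row polynomials *)
  (forall (p : params) (n k : nat), (k <= n)%N ->
     T_of (UBT p) n k =
       (-1) ^+ (n - k) * \sum_(k <= j < n.+1) 'C(j, k)%:R * T_of p n j) /\
  (forall (p : params) (n : nat),
     G_of (UBT p) n = (-1) ^+ n *: (G_of p n \Po (1 - 'X))) /\
  (* RT and UBT are involutions generating a group isomorphic to S_3:
     two distinct involutions whose product has order exactly 3 *)
  (forall p : params, RT (RT p) = p) /\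
  (forall p : params, UBT (UBT p) = p) /\
  (forall p : params, RT (UBT (RT (UBT (RT (UBT p))))) = p) /\
  (exists p : params, RT (UBT p) <> p) /\
  (exists p : params, RT p <> UBT p).
Proof.
split. move=> [[[[a b] c] a'] c'] n k Hk /=. exact: (@gkp_RT C a b c a' c' n k Hk).
split; first by move=> [[[[a b] c] a'] c'] n t Ht /=; exact: (@eval_RT C a b c a' c' n t Ht).
split; first by move=> [[[[a b] c] a'] c'] n k Hk /=; exact: (@gkp_UBT C a b c a' c' n k Hk).
split; first by move=> [[[[a b] c] a'] c'] n /=; exact: (@row_UBT C a b c a' c' n).
split; first by move=> [[[[a b] c] a'] c'] /=; congr (_, _, _, _, _); ring.
split; first by move=> [[[[a b] c] a'] c'] /=; congr (_, _, _, _, _); ring.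
split; first by move=> [[[[a b] c] a'] c'] /=; congr (_, _, _, _, _); ring.
split.
  exists (0, 0, 0, 1, 0) => /= /(congr1 (fun p : params => p.1.1.1.1)) /=.
  move=> H; have H1 : (1 : C) = 0 by rewrite -[in RHS]H subr0.
  by move: (@oner_neq0 C); rewrite H1 eqxx.
exists (0, 0, 0, 1, 0) => /= /(congr1 (fun p : params => p.1.1.1.1)) /=.
rewrite subr0 oppr0 sub0r => H.
have H2 : ((2:nat)%:R : C) = 0.
  by change ((1 : C) + 1 = 0); rewrite {1}H addNr.
have H3 : ((2:nat)%:R : C) != 0 by rewrite pnatr_eq0.
by move: H3; rewrite H2 eqxx.
Qed.
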